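(* Let $N_T\geq 1$ be an integer, let $m=2(N_T+2)$ and $n=N_T+2+m$. Let $\tilde A_0,\tilde A_1,\dots,\tilde A_{N_T},\tilde\gamma_0,\tilde\gamma_1,\dots,\tilde\gamma_{N_T+1}$ be arbitrary real numbers and let $r\in\mathbb{R}$, $r\neq 0$. Then there exist $\gamma>0$ and a unitary $n\times n$ complex matrix $M=(M_{i,j})_{i,j=0}^{n-1}$ of the following form: with $A_j:=\gamma\tilde A_j$ ($0\le j\le N_T$) and $\gamma_i:=\gamma\tilde\gamma_i$ ($0\le i\le N_T+1$), - $M_{0,j}=A_j$ for $0\le j\le N_T$; - for $0\le k\le N_T$ and $0\le j\le N_T$: $M_{k+1,j}=0$ if $j=k$, and $M_{k+1,j}=-r\,A_j$ if $j\neq k$; - $M_{i,N_T+1}=\gamma_i$ for $0\le i\le N_T+1$; - all remaining entries (those with $i\geq N_T+2$ or $j\geq N_T+2$) are unconstrained complex numbers.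
   Context: Interpretation: rows/columns $0,1,\dots,N_T+1$ correspond to the basis states $|E\rangle,|\tau_0\rangle,\dots,|\tau_{N_T}\rangle$ of a clock and the last $m$ indices to stationary ancilla states $|A_1\rangle,\dots,|A_m\rangle$; the prescribed entries encode the conditions that the outcomes corresponding to $A_0,\dots,A_{N_T}$ are counterfactual outcomes, with $r=\cos\theta/\sin\theta$ and probabilities $|\cos\theta\, A_l|^2$. The proposition asserts existence of such a counterfactual clock with $m=2(N_T+2)$ ancillas for arbitrarily many distinguishable times. *)

(* Defs.v *)
From HB Require Import structures.
From mathcomp Require Import all_boot all_order all_algebra.
From mathcomp Require Export spectral.
From mathcomp Require Export complex.
From mathcomp Require Export reals.
Set Implicit Arguments. Unset Strict Implicit. Unset Printing Implicit Defensive.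
Import Order.TTheory GRing.Theory Num.Theory.
Local Open Scope ring_scope.

Definition clock_dim (NT : nat) : nat := (NT + 2 + 2 * (NT + 2))%N.

(* Main.v *)
Require Import Defs.
From HB Require Import structures.
From mathcomp Require Import all_boot all_order all_algebra.
From mathcomp Require Import spectral complex reals.
From mathcomp Require Import lra zify.
Import Order.TTheory GRing.Theory Num.Theory.
Local Open Scope ring_scope.
Local Open Scope complex_scope.

Section Aux.
Local Open Scope sesquilinear_scope.

Lemma complete_unitary (C : numClosedFieldType) k n (V : 'M[C]_(k, n)) : V \is unitarymx ->
  exists M : 'M[C]_n, M \is unitarymx /\
    forall (i j : 'I_n) (i' : 'I_k), i = i' :> nat -> M i j = V i' j.
Proof.
move=> Vu.
pose O := orthomx Num.conj (mx_of_hermitian (hermitian1mx _)) V.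
have [m [W [Wu VW e]]] : exists m (W : 'M[C]_(m, n)),
    [/\ W \is unitarymx, V *m W^t* = 0 & (k + m)%N = n].
  exists (\rank O), (schmidt (row_base O)); split.
  - by apply: schmidt_unitarymx; rewrite rank_leq_col.
  - apply/orthomx1P; rewrite orthomx_sym.
    rewrite eqmx_schmidt_free ?row_base_free // eq_row_base.
    exact: submx_refl.
  - by rewrite -{1}(mxrank_unitary Vu) add_rank_ortho.
case: n / e in V Vu O W Wu VW *.
exists (col_mx V W); split.
  apply/unitarymxP; rewrite tr_col_mx map_row_mx mul_col_row.
  rewrite !(unitarymxP _) // VW.
  have -> : W *m V^t* = 0.
    by rewrite -[W]trmxCK -map_mxM -trmx_mul VW trmx0 map_mx0.
  by rewrite -scalar_mx_block.
move=> i j i' ii'.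
have -> : i = lshift m i' by apply: val_inj.
by rewrite col_mxEu.
Qed.

Lemma cast_unitary (C : numClosedFieldType) k n n' (e : n = n') (V : 'M[C]_(k, n)) :
  V \is unitarymx -> castmx (erefl k, e) V \is unitarymx.
Proof. by case: n' / e; rewrite castmx_id. Qed.
End Aux.

Set Implicit Arguments.
Section Dil.
Local Open Scope sesquilinear_scope.
Variable R : rcfType.
Local Notation C := R[i].

Lemma tCmul m n p (A : 'M[C]_(m, n)) (B : 'M[C]_(n, p)) : (A *m B)^t* = B^t* *m A^t*.
Proof. by rewrite trmx_mul map_mxM. Qed.

Lemma psd_diag k (B : 'M[C]_k) : exists (P : 'M[C]_k) (e : 'rV[C]_k),
  [/\ P \is unitarymx, B *m B^t* = P^t* *m diag_mx e *m P & forall i, 0 <= e 0 i].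
Proof.
pose G := B *m B^t*.
have GG : G^t* = G by rewrite /G tCmul trmxCK.
have Gn : G \is normalmx by apply/normalmxP; rewrite GG.
have := orthomx_spectralP Gn.
set P := spectralmx G; set e := spectral_diag G => HG.
have Pu : P \is unitarymx by apply: spectral_unitarymx.
have PP : P *m P^t* = 1%:M by apply/unitarymxP.
rewrite invmx_unitary // in HG.
exists P, e; split => // i.
have D : diag_mx e = (P *m B) *m (P *m B)^t*.
  rewrite tCmul !mulmxA -(mulmxA P B) -/G HG !mulmxA PP mul1mx.
  by rewrite -!mulmxA PP mulmx1.
move/matrixP: D => /(_ i i); rewrite !mxE eqxx mulr1n => ->.
by apply: sumr_ge0 => j _; rewrite !mxE mul_conjC_ge0.
Qed.

Lemma dilation k (B : 'M[C]_k) : exists g : R, 0 < g /\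
  exists Cm : 'M[C]_k, (g%:C *: B) *m (g%:C *: B)^t* + Cm *m Cm^t* = 1%:M.
Proof.
have [P [e [Pu HB e0]]] := psd_diag B.
pose E := \sum_i complex.Re (e 0 i).
have ER : forall i, e 0 i = (complex.Re (e 0 i))%:C.
  by move=> i; rewrite {1}[e 0 i]complexE ger0_Im // mulr0 addr0.
have Re0 : forall i, 0 <= complex.Re (e 0 i) by move=> i; rewrite -ler0c -ER.
have E0 : 0 <= E by apply: sumr_ge0.
have Ei : forall i, complex.Re (e 0 i) <= E.
  move=> i; rewrite /E (bigD1 i) //= lerDl; exact: sumr_ge0.
pose g := (1 + E)^-1.
have E1 : 0 < 1 + E by move: E0; clear; lra.
have g0 : 0 < g by rewrite invr_gt0.
have gE : g * (1 + E) = 1 by rewrite mulVf // gt_eqF.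
have g1 : g <= 1.
  by rewrite invr_le1 // ?unitfE ?gt_eqF //; move: E0; clear; lra.
have gi : forall i, 0 <= 1 - g%:C ^+ 2 * e 0 i.
  move=> i; rewrite ER.
  have -> : 1 - g%:C ^+ 2 * (complex.Re (e 0 i))%:C = (1 - g ^+ 2 * complex.Re (e 0 i))%:C.
    by rewrite rmorphB rmorphM rmorphXn rmorph1.
  rewrite ler0c.
  have := Ei i; have := Re0 i; move: gE g0 g1; clear; nra.
exists g; split => //.
pose s := \row_i sqrtC (1 - g%:C ^+ 2 * e 0 i).
exists (P^t* *m diag_mx s).
have gc : Num.conj g%:C = g%:C by rewrite geC0_conj // ler0c; exact: ltW.
have -> : (g%:C *: B) *m (g%:C *: B)^t* = g%:C ^+ 2 *: (B *m B^t*).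
  have -> : (g%:C *: B)^t* = g%:C *: B^t*.
    by apply/matrixP => i j; rewrite !mxE rmorphM; congr (_ * _); exact: gc.
  by rewrite -(scalemxAl (g%:C) B) -scalemxAr scalerA expr2.
rewrite HB tCmul trmxCK tr_diag_mx map_diag_mx -!mulmxA.
rewrite scalemxAr scalemxAl (mulmxA (diag_mx s)) -mulmxDr -mulmxDl.
have -> : g%:C ^+ 2 *: diag_mx e + diag_mx s *m diag_mx (map_mx Num.conj s) = 1%:M.
  apply/matrixP => i j; rewrite mul_diag_mx !mxE.
  case: (eqVneq i j) => [->|ne]; last by rewrite !mulr0n !mulr0 addr0.
  by rewrite !mulr1n geC0_conj ?sqrtC_ge0 // -expr2 sqrtCK addrC subrK.
rewrite mul1mx.
have : P^t* \is unitarymx by rewrite trmxC_unitary.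
by move/unitarymxP; rewrite trmxCK.
Qed.
End Dil.
Unset Implicit Arguments.

Theorem proposition2 (R : realType) (NT : nat) (hNT : (1 <= NT)%N)
  (At : nat -> R) (gt : nat -> R) (r : R) (hr : r != 0) :
  exists (gamma : R) (M : 'M[R[i]]_(clock_dim NT)),
    [/\ 0 < gamma,
        M \is unitarymx,
        (forall i j : 'I_(clock_dim NT), i = 0%N :> nat -> (j <= NT)%N ->
            M i j = (gamma * At j)%:C),
        (forall (i j : 'I_(clock_dim NT)), (1 <= i <= NT.+1)%N -> (j <= NT)%N ->
            M i j = (if j == i.-1 :> nat then 0 else (- r * (gamma * At j))%:C))
      & (forall (i j : 'I_(clock_dim NT)), (i <= NT.+1)%N -> j = NT.+1 :> nat ->
            M i j = (gamma * gt i)%:C)].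
Proof.
pose k := NT.+2.
pose bt (i j : nat) : R := if (j <= NT)%N then
   (if i == 0%N then At j else if j == i.-1 then 0 else - r * At j) else gt i.
pose Bt : 'M[R[i]]_k := \matrix_(i, j) (bt i j)%:C.
have [g [g0 [Cm HC]]] := @dilation _ _ Bt.
pose V0 := row_mx (g%:C *: Bt) (row_mx Cm (0 : 'M[R[i]]_(k, k))).
have V0u : V0 \is unitarymx.
  apply/unitarymxP; rewrite /V0 !tr_row_mx !map_col_mx !mul_row_col.
  by rewrite trmx0 map_mx0 mul0mx addr0.
have e : (k + (k + k))%N = clock_dim NT.
  by rewrite /clock_dim /k addn2 mul2n -addnn.
have [M [Mu HM]] := complete_unitary _ _ _ _ (cast_unitary _ _ _ _ e _ V0u).
have HMe : forall (i j : 'I_(clock_dim NT)), (i < k)%N -> (j < k)%N ->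
    M i j = (g * bt i j)%:C.
  move=> i j ik jk.
  rewrite (HM i j (Ordinal ik)) // castmxE /=.
  have -> : cast_ord (esym e) j = lshift (k + k) (Ordinal jk) by apply: val_inj.
  rewrite row_mxEl !mxE /= rmorphM /=.
  congr (_ * _); congr ((bt _ _)%:C).
exists g, M; split => //.
- move=> i j i0 hj.
  have ik : (i < k)%N by rewrite i0.
  have jk : (j < k)%N by rewrite /k; lia.
  by rewrite HMe // /bt hj i0.
- move=> i j /andP[i1 i2] hj.
  have ik : (i < k)%N by rewrite /k; lia.
  have jk : (j < k)%N by rewrite /k; lia.
  rewrite HMe // /bt hj.
  have -> : (i == 0%N :> nat) = false by apply/negbTE; rewrite -lt0n.
  case: ifP => _; first by rewrite mulr0.
  by rewrite mulrCA.
- move=> i j hi hj.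
  have ik : (i < k)%N by rewrite /k; lia.
  have jk : (j < k)%N by rewrite hj.
  by rewrite HMe // /bt hj ltnn.
Qed.
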